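(* For every M$\Delta$C $\mathbf K$ the following are equivalent: (a) there exist two coprime proper thick ideals of $\mathbf K$; (b) there exist two distinct maximal ideals of $\mathbf K$; (c) there exist two coprime proper principal ideals of $\mathbf K$; (d) $\operatorname{Spc}\mathbf K$ is reducible, i.e. there exist proper closed subsets $Z_1,Z_2\subsetneq\operatorname{Spc}\mathbf K$ with $\operatorname{Spc}\mathbf K=Z_1\cup Z_2$.
   Context: M$\Delta$C: triangulated category with monoidal structure $(\otimes,\mathbf 1)$, $\otimes$ exact in each variable (no rigidity, generation or Noetherian assumptions). Thick ideal: full triangulated subcategory closed under direct summands and under $A\mapsto A\otimes B$, $B\otimes A$ for all $B\in\mathbf K$. $\langle\mathcal S\rangle$ = smallest thick ideal containing $\mathcal S$; principal ideal = $\langle A\rangle$ for a single object $A$; $\mathbf I,\mathbf J$ coprime if $\langle\mathbf I\cup\mathbf J\rangle=\mathbf K$; a maximal ideal is a maximal proper thick ideal. A proper thick ideal $\mathbf P$ is prime if for all thick ideals $\mathbf I,\mathbf J$, $\mathbf I\otimes\mathbf J\subseteq\mathbf P$ (i.e. $A\otimes B\in\mathbf P$ for all $A\in\mathbf I,B\in\mathbf J$) implies $\mathbf I\subseteq\mathbf P$ or $\mathbf J\subseteq\mathbf P$. $\operatorname{Spc}\mathbf K$ is the set of prime ideals with the topology whose closed sets are the intersections of the basic closed sets $V(A)=\{\mathbf P:A\notin\mathbf P\}$, $A\in\mathbf K$. *)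

(* Defs.v *)
From mathcomp Require Import all_boot all_algebra.
Set Implicit Arguments. Unset Strict Implicit. Unset Printing Implicit Defensive.
Import GRing.Theory.
Local Open Scope ring_scope.

Record Cat := {
  Obj : Type;
  Hom : Obj -> Obj -> zmodType;
  comp : forall A B C : Obj, Hom B C -> Hom A B -> Hom A C;
  idm : forall A : Obj, Hom A A;
  comp_assoc : forall A B C D (h : Hom C D) (g : Hom B C) (f : Hom A B),
      comp h (comp g f) = comp (comp h g) f;
  comp_id_l : forall A B (f : Hom A B), comp (idm B) f = f;
  comp_id_r : forall A B (f : Hom A B), comp f (idm A) = f;
  comp_addl : forall A B C (g1 g2 : Hom B C) (f : Hom A B),
      comp (g1 + g2) f = comp g1 f + comp g2 f;
  comp_addr : forall A B C (g : Hom B C) (f1 f2 : Hom A B),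
      comp g (f1 + f2) = comp g f1 + comp g f2
}.
Arguments comp {c A B C}.
Arguments idm {c}.

Section CatDefs.
Variable C : Cat.
Implicit Types A B S Z : Obj C.

Definition is_iso A B (f : Hom A B) :=
  exists g : Hom B A, comp g f = idm A /\ comp f g = idm B.
Definition iso_obj A B := exists f : Hom A B, is_iso f.
Definition is_zero_obj Z := idm Z = 0.
Definition is_biprod A B S (i1 : Hom A S) (i2 : Hom B S) (p1 : Hom S A) (p2 : Hom S B) :=
  [/\ comp p1 i1 = idm A, comp p2 i2 = idm B, comp p2 i1 = 0, comp p1 i2 = 0
    & comp i1 p1 + comp i2 p2 = idm S].
End CatDefs.

Record AdditiveAx (C : Cat) : Prop := {
  add_zero : exists Z : Obj C, is_zero_obj Z;
  add_biprod : forall A B : Obj C, exists (S : Obj C) (i1 : Hom A S) (i2 : Hom B S)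
      (p1 : Hom S A) (p2 : Hom S B), is_biprod i1 i2 p1 p2
}.

Record TriData (C : Cat) := {
  shift : Obj C -> Obj C;
  shiftm : forall A B : Obj C, Hom A B -> Hom (shift A) (shift B);
  dist : forall X Y Z : Obj C, Hom X Y -> Hom Y Z -> Hom Z (shift X) -> Prop
}.
Arguments shift {C} t.
Arguments shiftm {C} t {A B}.
Arguments dist {C} t {X Y Z}.

Record TriAx (C : Cat) (T : TriData C) : Prop := {
  shiftm_id : forall A : Obj C, shiftm T (idm A) = idm (shift T A);
  shiftm_comp : forall (A B D : Obj C) (g : Hom B D) (f : Hom A B),
      shiftm T (comp g f) = comp (shiftm T g) (shiftm T f);
  shiftm_add : forall (A B : Obj C) (f g : Hom A B),
      shiftm T (f + g) = shiftm T f + shiftm T g;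
  shift_ff : forall A B : Obj C, bijective (@shiftm C T A B);
  shift_es : forall A : Obj C, exists B, iso_obj (shift T B) A;
  tr1_iso : forall (X Y Z X' Y' Z' : Obj C) (f : Hom X Y) (g : Hom Y Z) (h : Hom Z (shift T X))
      (f' : Hom X' Y') (g' : Hom Y' Z') (h' : Hom Z' (shift T X'))
      (a : Hom X X') (b : Hom Y Y') (c : Hom Z Z'),
      is_iso a -> is_iso b -> is_iso c ->
      comp f' a = comp b f -> comp g' b = comp c g -> comp h' c = comp (shiftm T a) h ->
      dist T f g h -> dist T f' g' h';
  tr1_id : forall X Z : Obj C, is_zero_obj Z ->
      dist T (idm X) (0 : Hom X Z) (0 : Hom Z (shift T X));
  tr1_ext : forall (X Y : Obj C) (f : Hom X Y),
      exists (Z : Obj C) (g : Hom Y Z) (h : Hom Z (shift T X)), dist T f g h;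
  tr2 : forall (X Y Z : Obj C) (f : Hom X Y) (g : Hom Y Z) (h : Hom Z (shift T X)),
      dist T f g h <-> dist T g h (- shiftm T f);
  tr3 : forall (X Y Z X' Y' Z' : Obj C) (f : Hom X Y) (g : Hom Y Z) (h : Hom Z (shift T X))
      (f' : Hom X' Y') (g' : Hom Y' Z') (h' : Hom Z' (shift T X'))
      (a : Hom X X') (b : Hom Y Y'),
      dist T f g h -> dist T f' g' h' -> comp f' a = comp b f ->
      exists c : Hom Z Z', comp g' b = comp c g /\ comp h' c = comp (shiftm T a) h;
  tr4 : forall (X Y Z Z' X' Y' : Obj C) (f : Hom X Y) (g : Hom Y Z)
      (f' : Hom Y Z') (f'' : Hom Z' (shift T X))
      (g' : Hom Z X') (g'' : Hom X' (shift T Y))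
      (h' : Hom Z Y') (h'' : Hom Y' (shift T X)),
      dist T f f' f'' -> dist T g g' g'' -> dist T (comp g f) h' h'' ->
      exists (u : Hom Z' Y') (v : Hom Y' X'),
        [/\ dist T u v (comp (shiftm T f') g''),
            comp u f' = comp h' g, comp h'' u = f'',
            comp v h' = g' & comp g'' v = comp (shiftm T f) h'']
}.

Record MonData (C : Cat) := {
  tens : Obj C -> Obj C -> Obj C;
  tensm : forall A A' B B' : Obj C, Hom A A' -> Hom B B' -> Hom (tens A B) (tens A' B');
  unit : Obj C;
  assoc : forall A B D : Obj C, Hom (tens (tens A B) D) (tens A (tens B D));
  lunit : forall A : Obj C, Hom (tens unit A) A;
  runit : forall A : Obj C, Hom (tens A unit) A
}.
Arguments tens {C} m.
Arguments tensm {C} m {A A' B B'}.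
Arguments unit {C} m.
Arguments assoc {C} m {A B D}.
Arguments lunit {C} m {A}.
Arguments runit {C} m {A}.

Record MonAx (C : Cat) (M : MonData C) : Prop := {
  tensm_id : forall A B : Obj C, tensm M (idm A) (idm B) = idm (tens M A B);
  tensm_comp : forall (A1 A2 A3 B1 B2 B3 : Obj C) (f : Hom A1 A2) (g : Hom A2 A3)
      (f' : Hom B1 B2) (g' : Hom B2 B3),
      tensm M (comp g f) (comp g' f') = comp (tensm M g g') (tensm M f f');
  tensm_addl : forall (A A' B B' : Obj C) (f1 f2 : Hom A A') (g : Hom B B'),
      tensm M (f1 + f2) g = tensm M f1 g + tensm M f2 g;
  tensm_addr : forall (A A' B B' : Obj C) (f : Hom A A') (g1 g2 : Hom B B'),
      tensm M f (g1 + g2) = tensm M f g1 + tensm M f g2;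
  assoc_iso : forall A B D : Obj C, is_iso (@assoc C M A B D);
  assoc_nat : forall (A A' B B' D D' : Obj C) (f : Hom A A') (g : Hom B B') (h : Hom D D'),
      comp (assoc M) (tensm M (tensm M f g) h) = comp (tensm M f (tensm M g h)) (assoc M);
  lunit_iso : forall A : Obj C, is_iso (@lunit C M A);
  lunit_nat : forall (A A' : Obj C) (f : Hom A A'),
      comp (lunit M) (tensm M (idm (unit M)) f) = comp f (lunit M);
  runit_iso : forall A : Obj C, is_iso (@runit C M A);
  runit_nat : forall (A A' : Obj C) (f : Hom A A'),
      comp (runit M) (tensm M f (idm (unit M))) = comp f (runit M);
  pentagon : forall A B D E : Obj C,
      comp (@assoc C M A B (tens M D E)) (@assoc C M (tens M A B) D E)
      = comp (tensm M (idm A) (@assoc C M B D E))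
             (comp (@assoc C M A (tens M B D) E) (tensm M (@assoc C M A B D) (idm E)));
  triangle : forall A B : Obj C,
      comp (tensm M (idm A) (@lunit C M B)) (@assoc C M A (unit M) B)
      = tensm M (@runit C M A) (idm B)
}.

Record ExactAx (C : Cat) (T : TriData C) (M : MonData C) := {
  rsh : forall A B : Obj C, Hom (tens M (shift T A) B) (shift T (tens M A B));
  rsh_iso : forall A B, is_iso (rsh A B);
  rsh_nat : forall (A A' B : Obj C) (f : Hom A A'),
      comp (rsh A' B) (tensm M (shiftm T f) (idm B)) = comp (shiftm T (tensm M f (idm B))) (rsh A B);
  r_exact : forall (B X Y Z : Obj C) (f : Hom X Y) (g : Hom Y Z) (h : Hom Z (shift T X)),
      dist T f g h ->
      dist T (tensm M f (idm B)) (tensm M g (idm B)) (comp (rsh X B) (tensm M h (idm B)));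
  lsh : forall A B : Obj C, Hom (tens M A (shift T B)) (shift T (tens M A B));
  lsh_iso : forall A B, is_iso (lsh A B);
  lsh_nat : forall (A B B' : Obj C) (f : Hom B B'),
      comp (lsh A B') (tensm M (idm A) (shiftm T f)) = comp (shiftm T (tensm M (idm A) f)) (lsh A B);
  l_exact : forall (A X Y Z : Obj C) (f : Hom X Y) (g : Hom Y Z) (h : Hom Z (shift T X)),
      dist T f g h ->
      dist T (tensm M (idm A) f) (tensm M (idm A) g) (comp (lsh A X) (tensm M (idm A) h))
}.

Record MDC := {
  mcat : Cat;
  mtri : TriData mcat;
  mmon : MonData mcat;
  m_add : AdditiveAx mcat;
  m_tri : TriAx mtri;
  m_mon : MonAx mmon;
  m_exact : ExactAx mtri mmon
}.

Section Ideals.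
Variable K : MDC.
Local Notation Ob := (Obj (mcat K)).
Local Notation T := (mtri K).
Local Notation M := (mmon K).

Definition tt_thick (I : Ob -> Prop) : Prop :=
  [/\
      [/\ (forall Z : Ob, is_zero_obj Z -> I Z),
      (forall A B : Ob, iso_obj A B -> I A -> I B)
      & (forall A : Ob, I A <-> I (shift T A))],
      (forall (X Y Z : Ob) (f : Hom X Y) (g : Hom Y Z) (h : Hom Z (shift T X)),
         dist T f g h ->
         [/\ (I X -> I Y -> I Z), (I Y -> I Z -> I X) & (I X -> I Z -> I Y)]),
      (forall (A A' S : Ob) (i1 : Hom A S) (i2 : Hom A' S) (p1 : Hom S A) (p2 : Hom S A'),
         is_biprod i1 i2 p1 p2 -> I S -> I A)
    &
      (forall A B : Ob, I A -> I (tens M A B) /\ I (tens M B A))].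

Definition tt_gen (S : Ob -> Prop) : Ob -> Prop :=
  fun A => forall I, tt_thick I -> (forall X, S X -> I X) -> I A.

Definition tt_principal (A : Ob) : Ob -> Prop := tt_gen (fun X => X = A).

Definition tt_proper (I : Ob -> Prop) : Prop := exists A : Ob, ~ I A.

Definition tt_coprime (I J : Ob -> Prop) : Prop :=
  forall A : Ob, tt_gen (fun X => I X \/ J X) A.

Definition tt_maximal (I : Ob -> Prop) : Prop :=
  [/\ tt_thick I, tt_proper I &
      forall J, tt_thick J -> tt_proper J -> (forall A, I A -> J A) -> forall A, J A -> I A].

Definition tt_prime (P : Ob -> Prop) : Prop :=
  [/\ tt_thick P, tt_proper P &
      forall I J, tt_thick I -> tt_thick J ->
        (forall A B : Ob, I A -> J B -> P (tens M A B)) ->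
        (forall A, I A -> P A) \/ (forall A, J A -> P A)].

Definition Spc : Type := {P : Ob -> Prop | tt_prime P}.

Definition V (A : Ob) : Spc -> Prop := fun P => ~ proj1_sig P A.

Definition spc_closed (Z : Spc -> Prop) : Prop :=
  exists F : Ob -> Prop, forall P : Spc, Z P <-> (forall A, F A -> V A P).

End Ideals.

Arguments tt_thick {K}.
Arguments tt_gen {K}.
Arguments tt_principal {K}.
Arguments tt_proper {K}.
Arguments tt_coprime {K}.
Arguments tt_maximal {K}.
Arguments tt_prime {K}.
Arguments V {K}.
Arguments spc_closed {K}.

(* Main.v *)
Require Import Defs.
From mathcomp Require Import all_boot all_algebra.
From mathcomp Require Import boolp classical_sets.
From Stdlib Require Import Classical.
Set Implicit Arguments. Unset Strict Implicit. Unset Printing Implicit Defensive.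
Import GRing.Theory.
Local Open Scope ring_scope.

Local Notation Hom := Defs.Hom.
Local Notation comp := Defs.comp.

Section CatLemmas.
Variable C : Cat.

Lemma comp0r (A B D : Obj C) (g : Hom B D) : comp g (0 : Hom A B) = 0.
Proof.
have := comp_addr g (0 : Hom A B) 0; rewrite addr0 => H.
by apply: (addrI (comp g (0:Hom A B))); rewrite -H addr0.
Qed.

Lemma comp0l (A B D : Obj C) (f : Hom A B) : comp (0 : Hom B D) f = 0.
Proof.
have := comp_addl (0 : Hom B D) 0 f; rewrite addr0 => H.
by apply: (addrI (comp (0 : Hom B D) f)); rewrite -H addr0.
Qed.

Lemma compNr (A B D : Obj C) (g : Hom B D) (f : Hom A B) : comp g (- f) = - comp g f.
Proof.
apply/eqP; rewrite -subr_eq0 opprK -comp_addr addNr; exact/eqP/comp0r.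
Qed.

Lemma compNl (A B D : Obj C) (g : Hom B D) (f : Hom A B) : comp (- g) f = - comp g f.
Proof.
apply/eqP; rewrite -subr_eq0 opprK -comp_addl addNr; exact/eqP/comp0l.
Qed.

Lemma compBr (A B D : Obj C) (g : Hom B D) (f1 f2 : Hom A B) :
  comp g (f1 - f2) = comp g f1 - comp g f2.
Proof. by rewrite comp_addr compNr. Qed.

Lemma compBl (A B D : Obj C) (g1 g2 : Hom B D) (f : Hom A B) :
  comp (g1 - g2) f = comp g1 f - comp g2 f.
Proof. by rewrite comp_addl compNl. Qed.

Lemma iso_refl (A : Obj C) : iso_obj A A.
Proof. by exists (idm A); exists (idm A); rewrite comp_id_l. Qed.

Lemma iso_sym (A B : Obj C) : iso_obj A B -> iso_obj B A.
Proof. by case=> f [g [H1 H2]]; exists g; exists f. Qed.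

Lemma iso_trans (A B D : Obj C) : iso_obj A B -> iso_obj B D -> iso_obj A D.
Proof.
case=> f [f' [H1 H2]] [g [g' [H3 H4]]]; exists (comp g f); exists (comp f' g'); split.
  by rewrite comp_assoc -(comp_assoc f') H3 comp_id_r.
by rewrite comp_assoc -(comp_assoc g) H2 comp_id_r.
Qed.

Lemma iso_of (A B : Obj C) (f : Hom A B) : is_iso f -> iso_obj A B.
Proof. by exists f. Qed.

Lemma biprod_swap (A B S : Obj C) (i1 : Hom A S) (i2 : Hom B S) p1 p2 :
  is_biprod i1 i2 p1 p2 -> is_biprod i2 i1 p2 p1.
Proof. by case=> H1 H2 H3 H4 H5; split => //; rewrite addrC. Qed.

End CatLemmas.

Section Tri.
Variable K : MDC.
Local Notation Ob := (Obj (mcat K)).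
Local Notation T := (mtri K).
Local Notation M := (mmon K).
Local Notation TA := (m_tri K).

Lemma shiftm0 (A B : Ob) : shiftm T (0 : Hom A B) = 0.
Proof.
have := shiftm_add TA (0:Hom A B) 0; rewrite addr0 => H.
by apply: (addrI (shiftm T (0:Hom A B))); rewrite -H addr0.
Qed.

Lemma shiftm_inj (A B : Ob) : injective (@shiftm _ T A B).
Proof. have [g H1 H2] := shift_ff TA A B; exact: can_inj H1. Qed.

Lemma dist_comp0 (X Y Z : Ob) (f : Hom X Y) (g : Hom Y Z) (h : Hom Z (shift T X)) :
  dist T f g h -> comp g f = 0.
Proof.
move=> D; have [Z0 HZ0] := add_zero (m_add K).
have D0 := tr1_id TA X HZ0.
have [c [Hc _]] := tr3 TA (a := idm X) (b := f) D0 D erefl.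
by rewrite Hc comp0r.
Qed.

Lemma dist_exact (X Y Z : Ob) (f : Hom X Y) (g : Hom Y Z) (h : Hom Z (shift T X))
  (W : Ob) (u : Hom W Y) :
  dist T f g h -> comp g u = 0 -> exists v : Hom W X, comp f v = u.
Proof.
move=> D gu; have [Z0 HZ0] := add_zero (m_add K).
have D0 := (tr2 TA _ _ _).1 (tr1_id TA W HZ0).
have D1 := (tr2 TA _ _ _).1 D.
have [c [_ Hc]] := tr3 TA (a := u) (b := (0 : Hom Z0 Z)) D0 D1 ltac:(by rewrite gu comp0l).
have [sinv H1 H2] := shift_ff TA W X.
exists (sinv c); apply: shiftm_inj.
rewrite (shiftm_comp TA) H2; apply: oppr_inj.
by rewrite -compNl Hc compNr (shiftm_id TA) comp_id_r.
Qed.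

Lemma dist_mono (X Y Z : Ob) (f : Hom X Y) (g : Hom Y Z) (W : Ob) (t : Hom W X) :
  dist T f g 0 -> comp f t = 0 -> t = 0.
Proof.
move=> D ft; have D2 := (tr2 TA _ _ _).1 ((tr2 TA _ _ _).1 D).
have [v Hv] := dist_exact (u := shiftm T t) D2
  ltac:(by rewrite compNl -(shiftm_comp TA) ft shiftm0 oppr0).
by apply: shiftm_inj; rewrite shiftm0 -Hv comp0l.
Qed.

Lemma dist_split (X Y Z : Ob) (f : Hom X Y) (g : Hom Y Z) :
  dist T f g 0 -> exists (p : Hom Y X) (s : Hom Z Y), is_biprod f s p g.
Proof.
move=> D; have gf := dist_comp0 D.
have D1 := (tr2 TA _ _ _).1 D.
have [s gs] := dist_exact (u := idm Z) D1 ltac:(by rewrite comp0l).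
have [p fp] := dist_exact (u := idm Y - comp s g) D
  ltac:(by rewrite compBr comp_id_r comp_assoc gs comp_id_l subrr).
exists p, s; split => //.
- apply/eqP; rewrite -subr_eq0; apply/eqP; apply: (dist_mono D).
  rewrite compBr comp_assoc fp compBl comp_id_l -comp_assoc gf comp0r subr0.
  by rewrite comp_id_r subrr.
- apply: (dist_mono D).
  by rewrite comp_assoc fp compBl comp_id_l -comp_assoc gs comp_id_r subrr.
- by rewrite fp subrK.
Qed.

End Tri.

Section Ideals2.
Variable K : MDC.
Local Notation Ob := (Obj (mcat K)).
Local Notation T := (mtri K).
Local Notation M := (mmon K).
Local Notation TA := (m_tri K).
Local Notation MA := (m_mon K).
Local Notation EA := (m_exact K).
Local Notation "A ** B" := (tens M A B) (at level 40, left associativity).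
Implicit Types I S : Ob -> Prop.

Definition tri_thick (I : Ob -> Prop) : Prop :=
  [/\ [/\ (forall Z : Ob, is_zero_obj Z -> I Z),
      (forall A B : Ob, iso_obj A B -> I A -> I B)
      & (forall A : Ob, I A <-> I (shift T A))],
      (forall (X Y Z : Ob) (f : Hom X Y) (g : Hom Y Z) (h : Hom Z (shift T X)),
         dist T f g h ->
         [/\ (I X -> I Y -> I Z), (I Y -> I Z -> I X) & (I X -> I Z -> I Y)])
    & (forall (A A' S : Ob) (i1 : Hom A S) (i2 : Hom A' S) (p1 : Hom S A) (p2 : Hom S A'),
         is_biprod i1 i2 p1 p2 -> I S -> I A)].

Lemma thick_tri I : tt_thick I -> tri_thick I.
Proof. by case. Qed.

Lemma mk_thick I : tri_thick I -> (forall A B : Ob, I A -> I (A ** B) /\ I (B ** A)) ->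
  tt_thick I.
Proof. by case. Qed.

Lemma thick_iso I A B : tt_thick I -> iso_obj A B -> I A -> I B.
Proof. by case=> [[_ H _] _ _ _]; exact: H. Qed.

Lemma thick_zero I Z : tt_thick I -> is_zero_obj Z -> I Z.
Proof. by case=> [[H _ _] _ _ _]; exact: H. Qed.

Lemma thick_shift I A : tt_thick I -> I A <-> I (shift T A).
Proof. by case=> [[_ _ H] _ _ _]. Qed.

Lemma thick_tens_l I A B : tt_thick I -> I A -> I (A ** B).
Proof. by case=> _ _ _ H /(H _ B) []. Qed.

Lemma thick_tens_r I A B : tt_thick I -> I A -> I (B ** A).
Proof. by case=> _ _ _ H /(H _ B) []. Qed.

Lemma thick_summand I (A A' S : Ob) (i1 : Hom A S) (i2 : Hom A' S) p1 p2 :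
  tt_thick I -> is_biprod i1 i2 p1 p2 -> I S -> I A.
Proof. by case=> _ _ H _; exact: H. Qed.

Lemma thick_ext I (X Y Z : Ob) (f : Hom X Y) (g : Hom Y Z) (h : Hom Z (shift T X)) :
  tt_thick I -> dist T f g h -> I X -> I Z -> I Y.
Proof. by case=> _ H _ _ /H []. Qed.

Lemma gen_thick (S : Ob -> Prop) : tt_thick (tt_gen S).
Proof.
split; [split| | |].
- by move=> Z HZ I HI _; exact: thick_zero HI HZ.
- by move=> A B iAB HA I HI HS; exact: thick_iso HI iAB (HA I HI HS).
- move=> A; split=> HA I HI HS; [apply/(thick_shift A HI)|apply/(thick_shift A HI)]; exact: HA.
- move=> X Y Z f g h D; split=> H1 H2 I HI HS; case: HI (HI) => [_ Ht _ _] HI;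
  have [t1 t2 t3] := Ht _ _ _ _ _ _ D.
  + exact: t1 (H1 I HI HS) (H2 I HI HS).
  + exact: t2 (H1 I HI HS) (H2 I HI HS).
  + exact: t3 (H1 I HI HS) (H2 I HI HS).
- by move=> A A' S' i1 i2 p1 p2 B HS I HI HSS; exact: thick_summand HI B (HS I HI HSS).
- move=> A B HA; split=> I HI HS.
  + exact: thick_tens_l HI (HA I HI HS).
  + exact: thick_tens_r HI (HA I HI HS).
Qed.

Lemma gen_sub (S : Ob -> Prop) X : S X -> tt_gen S X.
Proof. by move=> HX I _; apply. Qed.

Lemma gen_min (S I : Ob -> Prop) : tt_thick I -> (forall X, S X -> I X) ->
  forall X, tt_gen S X -> I X.
Proof. by move=> HI HS X; apply. Qed.

Lemma tensm0l (A A' B B' : Ob) (g : Hom B B') : tensm M (0 : Hom A A') g = 0.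
Proof.
have := tensm_addl MA (0 : Hom A A') 0 g; rewrite addr0 => H.
by apply: (addrI (tensm M (0 : Hom A A') g)); rewrite -H addr0.
Qed.

Lemma tens_zero (Z B : Ob) : is_zero_obj Z -> is_zero_obj (Z ** B).
Proof. by rewrite /is_zero_obj -(tensm_id MA) => ->; rewrite tensm0l. Qed.

Lemma tens_iso_l (A A' B : Ob) : iso_obj A A' -> iso_obj (A ** B) (A' ** B).
Proof.
case=> f [g [H1 H2]]; exists (tensm M f (idm B)); exists (tensm M g (idm B)).
by rewrite -!(tensm_comp MA) H1 H2 comp_id_l !(tensm_id MA).
Qed.

Lemma tens_biprod (A A' S B : Ob) (i1 : Hom A S) (i2 : Hom A' S) p1 p2 :
  is_biprod i1 i2 p1 p2 ->
  is_biprod (tensm M i1 (idm B)) (tensm M i2 (idm B)) (tensm M p1 (idm B)) (tensm M p2 (idm B)).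
Proof.
case=> H1 H2 H3 H4 H5; split; rewrite -?(tensm_comp MA) ?comp_id_l.
- by rewrite H1 (tensm_id MA).
- by rewrite H2 (tensm_id MA).
- by rewrite H3 tensm0l.
- by rewrite H4 tensm0l.
- by rewrite -(tensm_addl MA) H5 (tensm_id MA).
Qed.

Lemma pull_zero (B : Ob) I : tri_thick I -> forall Z : Ob, is_zero_obj Z -> I (Z ** B).
Proof. case=> [[Hz Hi Hs] Ht Hsum] Z HZ; exact: Hz _ (tens_zero B HZ). Qed.

Lemma pull_iso (B : Ob) I : tri_thick I -> forall A A' : Ob, iso_obj A A' -> I (A ** B) -> I (A' ** B).
Proof. case=> [[Hz Hi Hs] Ht Hsum] A A' iA; exact: Hi _ _ (tens_iso_l B iA). Qed.

Lemma pull_shift (B : Ob) I : tri_thick I -> forall A : Ob, I (A ** B) <-> I (shift T A ** B).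
Proof.
case=> [[Hz Hi Hs] Ht Hsum] A; have iso1 : iso_obj (shift T A ** B) (shift T (A ** B)).
  by exists (rsh EA A B); exact: rsh_iso.
split=> HA; first exact: Hi _ _ (iso_sym iso1) ((Hs _).1 HA).
exact: (Hs _).2 (Hi _ _ iso1 HA).
Qed.

Lemma pull_dist (B : Ob) I : tri_thick I -> forall (X Y Z : Ob) (f : Hom X Y) (g : Hom Y Z) (h : Hom Z (shift T X)),
         dist T f g h ->
         [/\ (I (X ** B) -> I (Y ** B) -> I (Z ** B)), (I (Y ** B) -> I (Z ** B) -> I (X ** B)) & (I (X ** B) -> I (Z ** B) -> I (Y ** B))].
Proof.
case=> [[Hz Hi Hs] Ht Hsum] X Y Z f g h D; have D' := r_exact EA B D.
exact: Ht _ _ _ _ _ _ D'.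
Qed.

Lemma pull_sum (B : Ob) I : tri_thick I -> forall (A A' S : Ob) (i1 : Hom A S) (i2 : Hom A' S) (p1 : Hom S A) (p2 : Hom S A'),
         is_biprod i1 i2 p1 p2 -> I (S ** B) -> I (A ** B).
Proof.
case=> [[Hz Hi Hs] Ht Hsum] A A' S0 i1 i2 p1 p2 Hb HS; have Hb' := tens_biprod B Hb.
exact: (Hsum _ _ _ _ _ _ _ Hb' HS).
Qed.

Lemma pull_tri (B : Ob) I : tri_thick I -> tri_thick (fun X => I (X ** B)).
Proof.
move=> H; split; [split| |].
- exact: pull_zero H.
- exact: pull_iso H.
- exact: pull_shift H.
- exact: pull_dist H.
- exact: pull_sum H.
Qed.

Lemma all_tri (F : Ob -> Ob -> Prop) : (forall C, tri_thick (F C)) ->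
  tri_thick (fun X => forall C, F C X).
Proof.
move=> HF; split; [split| |].
- by move=> Z HZ C; case: (HF C) => [[H _ _] _ _]; exact: H.
- by move=> A B iAB HA C; case: (HF C) => [[_ H _] _ _]; exact: H iAB (HA C).
- move=> A; split=> HA C; case: (HF C) => [[_ _ H] _ _].
    exact: (proj1 (H A)) (HA C).
  exact: (proj2 (H A)) (HA C).
- move=> X Y Z f g h D; split=> H1 H2 C; case: (HF C) => [_ Ht _];
  have [t1 t2 t3] := Ht _ _ _ _ _ _ D; [exact: t1|exact: t2|exact: t3].
- by move=> A A' S i1 i2 p1 p2 Hb HS C; case: (HF C) => [_ _ H]; exact: H Hb (HS C).
Qed.

End Ideals2.

Section Main.
Variable K : MDC.
Local Notation Ob := (Obj (mcat K)).
Local Notation T := (mtri K).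
Local Notation M := (mmon K).
Local Notation TA := (m_tri K).
Local Notation MA := (m_mon K).
Local Notation EA := (m_exact K).
Local Notation "A ** B" := (tens M A B) (at level 40, left associativity).
Implicit Types I J S P : Ob -> Prop.

Lemma thick_dist I (X Y Z : Ob) (f : Hom X Y) (g : Hom Y Z) (h : Hom Z (shift T X)) :
  tt_thick I -> dist T f g h ->
  [/\ (I X -> I Y -> I Z), (I Y -> I Z -> I X) & (I X -> I Z -> I Y)].
Proof. by case=> _ H _ _; exact: H. Qed.

Lemma lunit_isoobj (A : Ob) : iso_obj (unit M ** A) A.
Proof. by exists (lunit M); exact: (lunit_iso MA). Qed.

Lemma assoc_isoobj (A B D : Ob) : iso_obj ((A ** B) ** D) (A ** (B ** D)).
Proof. by exists (assoc M); exact: (assoc_iso MA). Qed.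

Lemma thick_unit I : tt_thick I -> I (unit M) -> forall A, I A.
Proof.
move=> HI Hu A; exact: thick_iso HI (lunit_isoobj A) (thick_tens_l _ HI Hu).
Qed.

Lemma proper_unit I : tt_thick I -> tt_proper I -> ~ I (unit M).
Proof. by move=> HI [X nX] Hu; apply: nX; exact: thick_unit. Qed.

Lemma maximal_prime P : tt_maximal P -> tt_prime P.
Proof.
case=> HP Hpr Hmax; split => // I J HI HJ HIJ.
case: (classic (forall A, I A -> P A)) => [?|nIP]; [by left | right].
move=> B JB.
pose N := fun X => forall C, P ((X ** C) ** B).
have triN : tri_thick N := all_tri (fun C => pull_tri C (pull_tri B (thick_tri HP))).
have thN : tt_thick N.
  refine (mk_thick triN _) => X Y NX; split => C.
  - exact: thick_iso HP (tens_iso_l B (iso_sym (assoc_isoobj X Y C))) (NX (Y ** C)).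
  - exact: thick_iso HP (iso_trans (iso_sym (assoc_isoobj _ _ _))
      (tens_iso_l B (iso_sym (assoc_isoobj Y X C)))) (thick_tens_r Y HP (NX C)).
have MN : forall X, P X -> N X.
  move=> X PX C; exact: thick_tens_l _ HP (thick_tens_l _ HP PX).
have IN : forall X, I X -> N X.
  move=> X IX C; exact: HIJ _ _ (thick_tens_l C HI IX) JB.
pose G := tt_gen (fun X => P X \/ I X).
have GN : forall X, G X -> N X.
  by apply: gen_min thN _ => X [/MN|/IN].
have Gall : forall X, G X.
  apply: NNPP => nG.
  have pG : tt_proper G by have [X hX] := not_all_ex_not _ _ nG; exists X.
  apply: nIP => A IA.
  apply: (Hmax G (gen_thick _) pG _ A); last by apply: gen_sub; right.
  by move=> X PX; apply: gen_sub; left.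
exact: thick_iso HP (iso_trans (tens_iso_l B (lunit_isoobj (unit M))) (lunit_isoobj B))
  (GN _ (Gall (unit M)) (unit M)).
Qed.

Lemma exists_maximal I : tt_thick I -> tt_proper I ->
  exists P, tt_maximal P /\ forall X, I X -> P X.
Proof.
move=> HI pI.
pose Tp := {J : Ob -> Prop | [/\ tt_thick J, (forall X, I X -> J X) & ~ J (unit M)]}.
pose R := fun (s t : Tp) => `[< forall X, sval s X -> sval t X >].
have pr0 : [/\ tt_thick I, (forall X, I X -> I X) & ~ I (unit M)].
  by split => //; exact: proper_unit.
pose t0 : Tp := exist _ I pr0.
have sP : forall s : Tp, [/\ tt_thick (sval s), (forall X, I X -> sval s X) & ~ sval s (unit M)].
  by move=> [J HJ].
have [] := @ZL_preorder Tp t0 R.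
- by move=> t; apply/asboolP.
- by move=> r s t /asboolP H1 /asboolP H2; apply/asboolP => X /H1 /H2.
- move=> A tA.
  have common : forall s1 s2 : Tp, (A s1 \/ s1 = t0) -> (A s2 \/ s2 = t0) ->
      exists s, [/\ (A s \/ s = t0), (forall X, sval s1 X -> sval s X)
                  & (forall X, sval s2 X -> sval s X)].
    move=> s1 s2 h1 h2.
    case: h1 => [a1|->]; last first.
      exists s2; split => // X /=; by case: (sP s2) => _ H _; apply: H.
    case: h2 => [a2|->]; last first.
      exists s1; split => //; first by left.
      by move=> X /=; case: (sP s1) => _ H _; apply: H.
    case: (tA s1 s2 a1 a2) => /asboolP H.
      by exists s2; split => //; left.
    by exists s1; split => //; left.
  pose U := fun X => exists s : Tp, (A s \/ s = t0) /\ sval s X.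
  have UI : forall X, I X -> U X by move=> X IX; exists t0; split; [right|].
  have thU : tt_thick U.
    split; [split| | |].
    + move=> Z HZ; apply: UI; exact: thick_zero HI HZ.
    + move=> X Y iXY [s [hs sX]]; exists s; split => //.
      by case: (sP s) => H _ _; exact: thick_iso H iXY sX.
    + move=> X; split=> -[s [hs sX]]; exists s; split => //;
      case: (sP s) => H _ _; [exact: proj1 (thick_shift X H) sX | exact: proj2 (thick_shift X H) sX].
    + move=> X Y Z f g h D; split=> -[s1 [h1 X1]] [s2 [h2 X2]];
      have [s [hs S1 S2]] := common s1 s2 h1 h2; exists s; split => //;
      case: (sP s) => H _ _; have [t1 t2 t3] := thick_dist H D.
      * exact: t1 (S1 _ X1) (S2 _ X2).
      * exact: t2 (S1 _ X1) (S2 _ X2).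
      * exact: t3 (S1 _ X1) (S2 _ X2).
    + move=> A0 A' S0 i1 i2 p1 p2 Hb [s [hs sS]]; exists s; split => //.
      by case: (sP s) => H _ _; exact: thick_summand H Hb sS.
    + move=> X Y [s [hs sX]]; case: (sP s) => H _ _; split; exists s; split => //.
      * exact: thick_tens_l H sX.
      * exact: thick_tens_r H sX.
  have prU : [/\ tt_thick U, (forall X, I X -> U X) & ~ U (unit M)].
    split => // -[s [_ su]]; by case: (sP s) => _ _; apply.
  exists (exist _ U prU) => s As; apply/asboolP => X sX; exists s; split => //; by left.
- move=> [Pm [HPm IPm nPm]] Hprem; exists Pm; split => //.
  split => //; first by exists (unit M).
  move=> J HJ pJ PJ.
  have HJ' : [/\ tt_thick J, (forall X, I X -> J X) & ~ J (unit M)].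
    by split => //; [move=> X /IPm /PJ | exact: proper_unit].
  have /asboolP := Hprem (exist _ J HJ') ltac:(by apply/asboolP).
  by [].
Qed.

Lemma join_obj (a1 a2 : Ob) : exists W : Ob,
  (forall I, tt_thick I -> I a1 -> I a2 -> I W) /\ (forall I, tt_thick I -> I W -> I a1 /\ I a2).
Proof.
have [W [g [h D]]] := tr1_ext TA (0 : Hom a2 (shift T a1)).
have D1 := (tr2 TA _ _ _).1 D.
rewrite shiftm0 oppr0 in D1.
have [p [s Hb]] := dist_split D1.
exists W; split.
- move=> I HI H1 H2.
  exact: thick_ext HI D1 (proj1 (thick_shift a1 HI) H1) (proj1 (thick_shift a2 HI) H2).
- move=> I HI HW; split.
  + exact: proj2 (thick_shift a1 HI) (thick_summand HI Hb HW).
  + exact: proj2 (thick_shift a2 HI) (thick_summand HI (biprod_swap Hb) HW).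
Qed.

End Main.

Section Compact.
Variable K : MDC.
Local Notation Ob := (Obj (mcat K)).
Local Notation M := (mmon K).
Implicit Types I J S P : Ob -> Prop.

Lemma a_to_c I J : tt_thick I -> tt_thick J -> tt_proper I -> tt_proper J -> tt_coprime I J ->
  exists A B : Ob, [/\ tt_proper (tt_principal A), tt_proper (tt_principal B)
    & tt_coprime (tt_principal A) (tt_principal B)].
Proof.
move=> HI HJ pI pJ cop.
pose pair (A B : Ob) := tt_gen (fun X => X = A \/ X = B).
pose U := fun X => exists A B, [/\ I A, J B & pair A B X].
have mono : forall A B A' B', pair A' B' A -> pair A' B' B -> forall X, pair A B X -> pair A' B' X.
  move=> A B A' B' HA HB X; apply: (gen_min (gen_thick _)) => Y [->|->] //.
have [Z0 HZ0] := add_zero (m_add K).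
have comb : forall A B A' B', I A -> J B -> I A' -> J B' -> exists A'' B'',
    [/\ I A'', J B'', (forall X, pair A B X -> pair A'' B'' X) & (forall X, pair A' B' X -> pair A'' B'' X)].
  move=> A B A' B' IA JB IA' JB'.
  have [Wa [Wa1 Wa2]] := join_obj A A'.
  have [Wb [Wb1 Wb2]] := join_obj B B'.
  have pW : tt_thick (pair Wa Wb) := gen_thick _.
  have hWa : pair Wa Wb Wa by apply: gen_sub; left.
  have hWb : pair Wa Wb Wb by apply: gen_sub; right.
  have [hA hA'] := Wa2 _ pW hWa.
  have [hB hB'] := Wb2 _ pW hWb.
  exists Wa, Wb; split.
  - exact: Wa1 _ HI IA IA'.
  - exact: Wb1 _ HJ JB JB'.
  - exact: mono hA hB.
  - exact: mono hA' hB'.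
have IZ : I Z0 := thick_zero HI HZ0.
have JZ : J Z0 := thick_zero HJ HZ0.
have thU : tt_thick U.
  split; [split| | |].
  + move=> Z HZ; exists Z0, Z0; split => //; exact: thick_zero (gen_thick _) HZ.
  + move=> X Y iXY [A [B [IA JB pX]]]; exists A, B; split => //.
    exact: thick_iso (gen_thick _) iXY pX.
  + move=> X; split=> -[A [B [IA JB pX]]]; exists A, B; split => //.
    * exact: proj1 (thick_shift X (gen_thick _)) pX.
    * exact: proj2 (thick_shift X (gen_thick _)) pX.
  + move=> X Y Z f g h D; split=> -[A [B [IA JB X1]]] [A' [B' [IA' JB' X2]]];
    have [A'' [B'' [IA'' JB'' S1 S2]]] := comb A B A' B' IA JB IA' JB';
    exists A'', B''; split => //;
    have [t1 t2 t3] := thick_dist (gen_thick (fun X => X = A'' \/ X = B'')) D.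
    * exact: t1 (S1 _ X1) (S2 _ X2).
    * exact: t2 (S1 _ X1) (S2 _ X2).
    * exact: t3 (S1 _ X1) (S2 _ X2).
  + move=> A0 A1 S0 i1 i2 p1 p2 Hb [A [B [IA JB pS]]]; exists A, B; split => //.
    exact: thick_summand (gen_thick _) Hb pS.
  + move=> X Y [A [B [IA JB pX]]]; split; exists A, B; split => //.
    * exact: thick_tens_l _ (gen_thick _) pX.
    * exact: thick_tens_r _ (gen_thick _) pX.
have [A [B [IA JB pu]]] : U (unit M).
  apply: (cop (unit M)) thU _ => X [IX|JX].
  - by exists X, Z0; split => //; exact: gen_sub (or_introl erefl).
  - by exists Z0, X; split => //; exact: gen_sub (or_intror erefl).
exists A, B; split.
- have [X nX] := pI; exists X => h; apply: nX.
  by apply: h HI _ => Y ->.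
- have [X nX] := pJ; exists X => h; apply: nX.
  by apply: h HJ _ => Y ->.
- move=> X.
  have th := gen_thick (fun X => tt_principal A X \/ tt_principal B X).
  apply: (thick_unit th _ X).
  refine (gen_min th (fun Y hY => _) pu).
  case: hY => ->; apply: gen_sub; [left|right]; exact: gen_sub.
Qed.

End Compact.

Theorem theoremB (K : MDC) :
  let Ob := Obj (mcat K) in
  let a := exists I J : Ob -> Prop,
      [/\ tt_thick I, tt_thick J, tt_proper I, tt_proper J & tt_coprime I J] in
  let b := exists I J : Ob -> Prop,
      [/\ tt_maximal I, tt_maximal J & exists A : Ob, ~ (I A <-> J A)] in
  let c := exists A B : Ob,
      [/\ tt_proper (tt_principal A), tt_proper (tt_principal B) & tt_coprime (tt_principal A) (tt_principal B)] in
  let d := exists Z1 Z2 : Spc K -> Prop,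
      [/\ spc_closed Z1, spc_closed Z2, (exists P, ~ Z1 P), (exists P, ~ Z2 P)
        & forall P, Z1 P \/ Z2 P] in
  [/\ a <-> b, b <-> c & c <-> d].
Proof.
cbv zeta.
have ab : (exists I J : Obj (mcat K) -> Prop,
      [/\ tt_thick I, tt_thick J, tt_proper I, tt_proper J & tt_coprime I J]) ->
    exists I J : Obj (mcat K) -> Prop,
      [/\ tt_maximal I, tt_maximal J & exists A : Obj (mcat K), ~ (I A <-> J A)].
  case=> I [J [HI HJ pI pJ cop]].
  have [M1 [mM1 IM1]] := exists_maximal HI pI.
  have [M2 [mM2 JM2]] := exists_maximal HJ pJ.
  exists M1, M2; split => //.
  apply: NNPP => H.
  have eq : forall A, M1 A <-> M2 A by move=> A; apply: NNPP => nA; apply: H; exists A.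
  case: mM1 => HM1 [X nX] _; apply: nX; apply: (cop X) HM1 _ => Y [/IM1 //|/JM2].
  exact: proj2 (eq Y).
have ba : (exists I J : Obj (mcat K) -> Prop,
      [/\ tt_maximal I, tt_maximal J & exists A : Obj (mcat K), ~ (I A <-> J A)]) ->
    exists I J : Obj (mcat K) -> Prop,
      [/\ tt_thick I, tt_thick J, tt_proper I, tt_proper J & tt_coprime I J].
  case=> I [J [mI mJ [A nA]]].
  case: (mI) => HI pI maxI; case: (mJ) => HJ pJ maxJ.
  exists I, J; split => //.
  move=> X; apply: NNPP => nX.
  have pG : tt_proper (tt_gen (fun X => I X \/ J X)) by exists X.
  have GI := maxI _ (gen_thick _) pG (fun Y IY => gen_sub (or_introl IY)).
  have JI : forall Y, J Y -> I Y := fun Y JY => GI Y (gen_sub (or_intror JY)).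
  have IJ := maxJ I HI pI JI.
  by apply: nA; split; [apply: IJ | apply: JI].
have ac : (exists I J : Obj (mcat K) -> Prop,
      [/\ tt_thick I, tt_thick J, tt_proper I, tt_proper J & tt_coprime I J]) ->
    exists A B : Obj (mcat K),
      [/\ tt_proper (tt_principal A), tt_proper (tt_principal B) & tt_coprime (tt_principal A) (tt_principal B)].
  case=> I [J [HI HJ pI pJ cop]]; exact: a_to_c HI HJ pI pJ cop.
have ca : (exists A B : Obj (mcat K),
      [/\ tt_proper (tt_principal A), tt_proper (tt_principal B) & tt_coprime (tt_principal A) (tt_principal B)]) ->
    exists I J : Obj (mcat K) -> Prop,
      [/\ tt_thick I, tt_thick J, tt_proper I, tt_proper J & tt_coprime I J].
  case=> A [B [pA pB cop]]; exists (tt_principal A), (tt_principal B); split => //;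
  exact: gen_thick.
split; first by split.
  by split => [/ba/ac|/ca/ab].
split.
- case=> A [B [pA pB cop]].
  exists (V A), (V B); split.
  + by exists (fun X => X = A) => P; split => [h X -> // | h]; exact: h A erefl.
  + by exists (fun X => X = B) => P; split => [h X -> // | h]; exact: h B erefl.
  + have [Mx [mMx sub]] := exists_maximal (gen_thick _) pA.
    exists (exist _ Mx (maximal_prime mMx)); rewrite /V /= => h; apply: h.
    by apply: sub; exact: gen_sub.
  + have [Mx [mMx sub]] := exists_maximal (gen_thick _) pB.
    exists (exist _ Mx (maximal_prime mMx)); rewrite /V /= => h; apply: h.
    by apply: sub; exact: gen_sub.
  + move=> [P prP]; rewrite /V /=; apply: NNPP => h.
    have PA : P A by apply: NNPP => nA; apply: h; left.
    have PB : P B by apply: NNPP => nB; apply: h; right.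
    case: prP => HP [X nX] _; apply: nX.
    refine (cop X P HP (fun Y hY => _)); case: hY => hY.
    * exact: hY P HP (fun Z e => eq_ind_r P PA e).
    * exact: hY P HP (fun Z e => eq_ind_r P PB e).
- case=> Z1 [Z2 [[F1 hF1] [F2 hF2] [P1 nP1] [P2 nP2] cov]].
  have [A [FA PA]] : exists A, F1 A /\ proj1_sig P1 A.
    apply: NNPP => h; apply: nP1; apply/(hF1 P1) => A FA PA.
    by apply: h; exists A; split.
  have [B [FB PB]] : exists B, F2 B /\ proj1_sig P2 B.
    apply: NNPP => h; apply: nP2; apply/(hF2 P2) => B FB PB.
    by apply: h; exists B; split.
  exists A, B; split.
  + case: (proj2_sig P1) => HP1 [X nX] _; exists X => h; apply: nX.
    by apply: h HP1 _ => Z ->.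
  + case: (proj2_sig P2) => HP2 [X nX] _; exists X => h; apply: nX.
    by apply: h HP2 _ => Z ->.
  + move=> X; apply: NNPP => nX.
    have [Mx [mMx sub]] := exists_maximal
      (gen_thick (fun Y => tt_principal A Y \/ tt_principal B Y)) (ex_intro _ X nX).
    have MA : Mx A by apply: sub; apply: gen_sub; left; exact: gen_sub.
    have MB : Mx B by apply: sub; apply: gen_sub; right; exact: gen_sub.
    case: (cov (exist _ Mx (maximal_prime mMx))) => [/hF1 h | /hF2 h].
    * exact: h A FA MA.
    * exact: h B FB MB.
Qed.
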